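(* Let $a\in\mathbb{Q}\setminus\{-1,0,1\}$ and let $z\in\mathbb{C}$ with $|z|\le1$. For any positive real numbers $\xi<x$, \begin{multline*} \sum_{\substack{p\le x \\ \nu_p(a)=0}} z^{\omega((p-1)/\mathrm{ord}_p(a))} = \sum_{\ell\mid Q_\xi} \mu^2(\ell) (z-1)^{\omega(\ell)} \#\{ p\le x : \nu_p(a)=0,\ \ell \mid (p-1)/\mathrm{ord}_p(a) \} \\ + O\biggl( \sum_{\xi<q\le x} \#\{ p\le x : \nu_p(a)=0,\ q \mid (p-1)/\mathrm{ord}_p(a) \} \biggr), \end{multline*} with an absolute implied constant.
   Context: $p,q$ denote primes. $\nu_p(a)$ is the $p$-adic valuation of $a$; $\mathrm{ord}_p(a)$ is the multiplicative order of $a$ mod $p$; $\omega(n)$ is the number of distinct prime factors; $\mu$ is the Möbius function. For $\xi>0$, $Q_\xi$ is the least common multiple of all positive integers $\le\xi$. The convention $0^0=1$ is used. *)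

(* Defs.v *)
From HB Require Import structures.
From mathcomp Require Import all_boot all_order all_algebra.
From mathcomp Require Import reals.
From mathcomp Require Import complex.
Set Implicit Arguments. Unset Strict Implicit. Unset Printing Implicit Defensive.
Import Order.TTheory GRing.Theory Num.Theory.
Local Open Scope ring_scope.

Definition nu (p : nat) (a : rat) : int :=
  (logn p `|numq a|%N)%:Z - (logn p `|denq a|%N)%:Z.

(* Multiplicative order of a modulo p: the least k >= 1 with a^k = 1 mod p,
   i.e. numq a ^ k = denq a ^ k (mod p).  When nu p a = 0 such k exists and
   k <= p - 1 (Fermat), so the search over 1..p is exhaustive. *)
Definition ordp (p : nat) (a : rat) : nat :=
  (find (fun k : nat => ((numq a) ^+ k.+1 == (denq a) ^+ k.+1 %[mod p%:Z])%Z)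
        (iota 0 p)).+1.

Definition omega (n : nat) : nat := size (primes n).

Definition squarefree (n : nat) : bool := (0 < n)%N && all (fun q => logn q n == 1%N) (primes n).
Definition mobius (n : nat) : int :=
  if squarefree n then (-1) ^+ omega n else 0.

Definition Qxi (R : realType) (xi : R) : nat :=
  \big[lcmn/1%N]_(1 <= k < (Num.truncn xi).+1) k.

Definition idx (p : nat) (a : rat) : nat := (p.-1 %/ ordp p a)%N.

Definition cnt (R : realType) (x : R) (a : rat) (l : nat) : nat :=
  \sum_(p < (Num.truncn x).+1 | [&& prime p, p%:R <= x, nu p a == 0
                                    & (l %| idx p a)%N]) 1%N.

Definition lhs (R : realType) (x : R) (a : rat) (z : R[i]) : R[i] :=
  \sum_(p < (Num.truncn x).+1 | [&& prime p, p%:R <= x & nu p a == 0])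
     z ^+ omega (idx p a).

Definition mainterm (R : realType) (xi x : R) (a : rat) (z : R[i]) : R[i] :=
  \sum_(l <- divisors (Qxi xi))
     ((mobius l) ^+ 2)%:~R * (z - 1) ^+ omega l * (cnt x a l)%:R.

Definition errterm (R : realType) (xi x : R) (a : rat) : nat :=
  \sum_(q < (Num.truncn x).+1 | [&& prime q, xi < q%:R & q%:R <= x])
     cnt x a q.

(* Main.v *)
Require Import Defs.
From HB Require Import structures.
From mathcomp Require Import all_boot all_order all_algebra.
From mathcomp Require Import reals.
From mathcomp Require Import complex.
Import Order.TTheory GRing.Theory Num.Theory.
Local Open Scope ring_scope.
Set Implicit Arguments. Unset Strict Implicit. Unset Printing Implicit Defensive.

Lemma PoszX' (n k : nat) : (Posz n) ^+ k = Posz (n ^ k)%N.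
Proof. by elim: k => // k IH; rewrite exprS IH expnS PoszM. Qed.

Lemma fermat_z (p : nat) (x : int) : prime p -> (p%:Z %| x ^+ p - x)%Z.
Proof.
move=> pp; rewrite -eqz_mod_dvd.
have p0 : p%:Z != 0 by rewrite eqz_nat -lt0n prime_gt0.
have r0 := modz_ge0 x p0.
rewrite -modzXm; apply/eqP.
rewrite -[in RHS]modz_mod.
move: r0; case: (x %% p)%Z => // n _.
rewrite PoszX' !modz_nat; congr Posz.
exact: fermat_little.
Qed.

Lemma fermat_z1 (p : nat) (x : int) : prime p -> ~~ (p%:Z %| x)%Z ->
  (p%:Z %| x ^+ p.-1 - 1)%Z.
Proof.
move=> pp npx.
have := @fermat_z p x pp.
have -> : x ^+ p - x = x * (x ^+ p.-1 - 1).
  by rewrite mulrBr mulr1 -exprS prednK // prime_gt0.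
rewrite Gauss_dvdzr // coprimezE /=.
by rewrite prime_coprime //; move: npx; rewrite dvdzE.
Qed.

Lemma nu0_ndvd (p : nat) (a : rat) : prime p -> a != 0 -> nu p a = 0 ->
  ~~ (p %| `|numq a|)%N /\ ~~ (p %| `|denq a|)%N.
Proof.
move=> pp a0 /eqP; rewrite /nu subr_eq0 eqz_nat => /eqP hl.
have n0 : (0 < `|numq a|)%N by rewrite absz_gt0 numq_eq0.
have d0 : (0 < `|denq a|)%N by rewrite absz_gt0 denq_eq0.
have cop := coprime_num_den a.
have hd : forall n, (0 < n)%N -> (p %| n)%N = (0 < logn p n)%N.
  by move=> n n0'; rewrite logn_gt0 mem_primes pp n0'.
suff : ~~ (p %| `|numq a|)%N.
  by move=> h; split=> //; rewrite hd // -hl -hd.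
apply/negP => pn.
have pd : (p %| `|denq a|)%N by rewrite hd // -hl -hd.
have : (p %| gcdn `|numq a| `|denq a|)%N by rewrite dvdn_gcd pn pd.
by rewrite (eqP cop) dvdn1 => /eqP p1; move: pp; rewrite p1.
Qed.

Lemma idx_bounds (p : nat) (a : rat) : prime p -> a != 0 -> nu p a = 0 ->
  (0 < idx p a)%N /\ (idx p a <= p.-1)%N.
Proof.
move=> pp a0 h0; have [hn hd] := nu0_ndvd pp a0 h0.
have p2 : (2 <= p)%N by exact: prime_gt1.
set P := (fun k : nat => ((numq a) ^+ k.+1 == (denq a) ^+ k.+1 %[mod p%:Z])%Z).
have Pi : P p.-2.
  have e : p.-2.+1 = p.-1 by case: (p) p2 => [|[]].
  rewrite /P e.
  rewrite eqz_mod_dvd.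
  have -> : numq a ^+ p.-1 - denq a ^+ p.-1 = (numq a ^+ p.-1 - 1) - (denq a ^+ p.-1 - 1).
    by rewrite opprB addrA subrK.
  by apply: rpredB; apply: fermat_z1; rewrite // dvdzE.
have hf : (find P (iota 0 p) <= p.-2)%N.
  rewrite leqNgt; apply/negP => /(before_find 0).
  rewrite nth_iota; last by case: (p) p2 => [|[]].
  by rewrite add0n Pi.
have ho : (ordp p a <= p.-1)%N.
  rewrite /ordp -/P; move: hf; case: (find _ _) => //; case: (p) p2 => [|[]]//.
have op : (0 < ordp p a)%N by [].
split; last by rewrite /idx leq_div.
by rewrite /idx divn_gt0.
Qed.
Lemma primes_mulpk p m k : prime p -> (0 < m)%N -> coprime p m -> (0 < k)%N ->
  perm_eq (primes (m * p ^ k)) (p :: primes m).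
Proof.
move=> pp m0 cp k0.
apply: uniq_perm; first exact: primes_uniq.
  rewrite /= primes_uniq andbT mem_primes pp m0 /=.
  by rewrite -prime_coprime.
move=> q; rewrite primesM //; last by rewrite expn_gt0 prime_gt0.
rewrite primesX // (primes_prime pp).
by rewrite !in_cons in_nil orbF orbC.
Qed.

Lemma omega_mulpk p m k : prime p -> (0 < m)%N -> coprime p m -> (0 < k)%N ->
  omega (m * p ^ k) = (omega m).+1.
Proof. by move=> *; rewrite /omega (perm_size (primes_mulpk _ _ _ _)). Qed.

Lemma sqf_mulp p e : prime p -> (0 < e)%N -> coprime p e ->
  squarefree (e * p) = squarefree e.
Proof.
move=> pp e0 cp.
have := primes_mulpk pp e0 cp (isT : (0 < 1)%N); rewrite expn1 => hP.
rewrite /squarefree muln_gt0 e0 prime_gt0 //= (perm_all _ hP) /=.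
have lp : logn p (e * p) = 1%N.
  by rewrite lognM ?(prime_gt0 pp) // (logn_coprime cp) (logn_prime _ pp) eqxx.
rewrite lp eqxx /=; apply: eq_in_all => q; rewrite mem_primes => /and3P[qp _ qe].
rewrite lognM ?(prime_gt0 pp) // (logn_prime _ pp).
have [eqp|neq] := eqVneq q p; last by rewrite addn0.
by move: cp; rewrite -eqp prime_coprime // qe.
Qed.

Definition fS (R0 : comRingType) (w : R0) (d : nat) : R0 :=
  (squarefree d)%:R * w ^+ omega d.

Lemma sqf_gt0 d : squarefree d -> (0 < d)%N.
Proof. by case/andP. Qed.

Lemma step (R0 : comRingType) (w : R0) p m k :
  prime p -> (0 < m)%N -> coprime p m -> (0 < k)%N ->
  \sum_(d <- divisors (m * p ^ k)) fS w d = (1 + w) * \sum_(d <- divisors m) fS w d.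
Proof.
move=> pp m0 cp k0.
have p0 := prime_gt0 pp.
set g := (m * p ^ k)%N.
have g0 : (0 < g)%N by rewrite muln_gt0 m0 expn_gt0 p0.
set T := divisors m ++ [seq (e * p)%N | e <- divisors m].
have pk : (p %| p ^ k)%N by case: (k) k0 => // k' _; rewrite expnS dvdn_mulr.
have Tsub : {subset T <= divisors g}.
  move=> d; rewrite mem_cat -dvdn_divisors // => /orP[|/mapP[e]].
    by rewrite -dvdn_divisors // => dm; rewrite dvdn_mulr.
  by rewrite -dvdn_divisors // => em ->; rewrite -dvdn_divisors // dvdn_mul.
have Tuniq : uniq T.
  rewrite cat_uniq divisors_uniq /= (map_inj_uniq (f:=fun e => (e * p)%N)) ?divisors_uniq; last by move=> x y /eqP; rewrite eqn_pmul2r // => /eqP.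
  rewrite andbT.
  apply/hasPn => d /mapP[e]; rewrite -!dvdn_divisors // => em -> /=.
  apply/negP => /(dvdn_trans (dvdn_mull e (dvdnn p))).
  by move=> pm; move: cp; rewrite prime_coprime // pm.
have van : forall d, d \in divisors g -> d \notin T -> fS w d = 0.
  move=> d; rewrite -dvdn_divisors // => dg dT.
  case sq: (squarefree d); last by rewrite /fS sq mul0r.
  exfalso; move/negP: dT; apply.
  have d0 := sqf_gt0 sq.
  rewrite mem_cat; apply/orP; case: (boolP (p %| d)%N) => pd; [right | left].
    have de : d = (d %/ p * p)%N by rewrite divnK.
    set e := (d %/ p)%N in de.
    have e0 : (0 < e)%N by move: d0; rewrite de muln_gt0 => /andP[].
    have lp : logn p d = 1%N.
      move: sq; rewrite /squarefree => /andP[_ /allP H]; apply/eqP/H.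
      by rewrite mem_primes pp d0.
    have le : logn p e = 0%N.
      by move: lp; rewrite de lognM // (logn_prime _ pp) eqxx addn1 => -[].
    have cpe : coprime p e.
      by rewrite prime_coprime // -{1}(expn1 p) pfactor_dvdn // le.
    rewrite de; apply: map_f; rewrite -dvdn_divisors //.
    have [k' ek] : exists k', k = k'.+1 by case: (k) k0 => // k'' _; exists k''.
    move: dg; rewrite /g ek de expnSr mulnA dvdn_pmul2r // Gauss_dvdl //.
    by apply: coprimeXr; rewrite coprime_sym.
  rewrite -dvdn_divisors //; move: dg; rewrite /g Gauss_dvdl //.
  by apply: coprimeXr; rewrite coprime_sym prime_coprime.
rewrite (bigID (fun d => d \in T)) /= [X in _ + X]big1_seq ?addr0; last first.
  by move=> d /andP[dT dg]; apply: van.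
rewrite -big_filter (perm_big T); last first.
  apply: uniq_perm => //; first by rewrite filter_uniq // divisors_uniq.
  move=> d; rewrite mem_filter; apply/andP/idP => [[]//|dT]; split=> //.
  exact: Tsub.
rewrite big_cat big_map mulrDl mul1r mulr_sumr; congr (_ + _).
apply: eq_big_seq => e; rewrite -dvdn_divisors // => em.
have e0 : (0 < e)%N by apply: dvdn_gt0 em.
have cpe : coprime p e by apply: coprime_dvdr cp.
rewrite /fS sqf_mulp // -(expn1 p) omega_mulpk // exprS.
by rewrite mulrCA.
Qed.

Lemma divsum (R0 : comRingType) (w : R0) g : (0 < g)%N ->
  \sum_(d <- divisors g) fS w d = (1 + w) ^+ omega g.
Proof.
elim: g {-2}g (leqnn g) => [|n IH] g gn g0; first by case: g gn g0.
case: (ltnP 1 g) => g1; last first.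
  have -> : g = 1%N by apply/eqP; rewrite eqn_leq g1 g0.
  have -> : divisors 1 = [:: 1%N] by [].
  by rewrite big_seq1 /fS /omega /= mul1r expr0.
have pp := pdiv_prime g1.
have [m cpm gE] := pfactor_coprime pp g0.
have k0 : (0 < logn (pdiv g) g)%N by rewrite logn_gt0 mem_primes pp g0 pdiv_dvd.
have m0 : (0 < m)%N by move: g0; rewrite gE muln_gt0 => /andP[].
have pk1 : (1 < pdiv g ^ logn (pdiv g) g)%N.
  by rewrite -{1}(expn0 (pdiv g)) ltn_exp2l // prime_gt1.
have mg : (m < g)%N by rewrite [X in (_ < X)%N]gE -[X in (X < _)%N]muln1 ltn_pmul2l.
rewrite gE step // IH //; last by rewrite -ltnS (leq_trans mg).
by rewrite omega_mulpk // exprS.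
Qed.

Lemma cnt_sum (R : realType) (x : R) a l : cnt x a l =
  \sum_(p < (Num.truncn x).+1 | [&& prime p, p%:R <= x & nu p a == 0])
      ((l %| idx p a)%N : nat).
Proof.
rewrite /cnt big_mkcond [RHS]big_mkcond; apply: eq_bigr => i _ /=.
rewrite !andbA; case: (prime i && _ && _) => //; by case: (l %| idx i a)%N.
Qed.

Lemma mob2 (R0 : comRingType) l : (((mobius l) ^+ 2)%:~R : R0) = (squarefree l)%:R.
Proof.
rewrite /mobius; case: (squarefree l) => /=; last by rewrite expr0n.
by rewrite sqrr_sign.
Qed.

Lemma Qxi_gt0 (R : realType) (xi : R) : (0 < Qxi xi)%N.
Proof.
rewrite /Qxi big_seq; apply: (big_ind (fun n => 0 < n)%N) => //[u v|k].
  by rewrite lcmn_gt0 => -> ->.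
by rewrite mem_index_iota => /andP[].
Qed.

Lemma Qxi_dvd (R : realType) (xi : R) q : 0 <= xi -> (0 < q)%N -> q%:R <= xi ->
  (q %| Qxi xi)%N.
Proof.
move=> xi0 q0 qxi; rewrite /Qxi (big_rem q); last first.
  by rewrite mem_index_iota q0 ltnS truncn_ge_nat.
by rewrite dvdn_lcml.
Qed.

Theorem proposition2p3 :
  exists K : nat, forall (R : realType) (a : rat) (z : R[i]) (xi x : R),
    a != -1 -> a != 0 -> a != 1 ->
    `|z| <= 1 ->
    0 < xi -> xi < x ->
    `| lhs x a z - mainterm xi x a z | <= (K * errterm xi x a)%:R.
Proof.
exists 2%N => R a z xi x _ a0 _ hz xi0 xix.
set N := (Num.truncn x).+1.
set Q := Qxi xi.
have Q0 : (0 < Q)%N := Qxi_gt0 xi.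
set C := fun p : nat => [&& prime p, p%:R <= x & nu p a == 0].
set E := fun p : nat =>
  \sum_(q < N | [&& prime q, xi < q%:R & q%:R <= x]) ((q %| idx p a)%N : nat).
have herr : errterm xi x a = \sum_(p < N | C p) E p.
  by rewrite /errterm; under eq_bigr do rewrite cnt_sum; exact: exchange_big.
have hmain : mainterm xi x a z = \sum_(p < N | C p) z ^+ omega (gcdn (idx p a) Q).
  rewrite /mainterm.
  under eq_bigr do rewrite cnt_sum natr_sum mulr_sumr.
  rewrite exchange_big; apply: eq_bigr => p /and3P[pp px /eqP nu0].
  have [n0 np] := idx_bounds pp a0 nu0.
  rewrite (eq_bigr (fun l => if (l %| idx p a)%N then fS (z - 1) l else 0)); last first.
    by move=> l _; rewrite mob2; case: (l %| idx p a)%N; rewrite ?mulr1 ?mulr0.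
  rewrite -big_mkcond -big_filter (perm_big (divisors (gcdn (idx p a) Q))); last first.
    apply: uniq_perm; rewrite ?filter_uniq ?divisors_uniq // => l.
    by rewrite mem_filter -!dvdn_divisors ?gcdn_gt0 ?n0 // dvdn_gcd andbC.
  by rewrite divsum ?gcdn_gt0 ?n0 // addrC subrK.
rewrite hmain /lhs -sumrB.
apply: le_trans (ler_norm_sum _ _ _) _.
rewrite herr big_distrr natr_sum /=; apply: ler_sum => p /and3P[pp px /eqP nu0].
have [n0 np] := idx_bounds pp a0 nu0.
case: (posnP (E p)) => [E0|Epos]; last first.
  apply: le_trans (ler_normB _ _) _; rewrite !normrX.
  apply: (@le_trans _ _ (1 + 1)).
    by apply: lerD; apply: exprn_ile1.
  have -> : (1 + 1 : R[i]) = 2%:R by [].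
  by rewrite ler_nat leq_pmulr.
suff -> : omega (gcdn (idx p a) Q) = omega (idx p a).
  by rewrite subrr normr0 E0.
congr size; apply/eq_primes => q.
rewrite !mem_primes gcdn_gt0 n0 /= dvdn_gcd.
case qp: (prime q) => //=; apply/idP/idP => [/andP[]//|qn]; rewrite qn /=.
apply/negPn/negP => nQ.
have qn' : (q <= idx p a)%N by apply: dvdn_leq.
have qp' : (q < p)%N.
  by apply: (leq_ltn_trans qn'); apply: (leq_ltn_trans np); rewrite ltn_predL prime_gt0.
have qN : (q < N)%N by apply: ltn_trans qp' _.
have : (0 < E p)%N.
  rewrite /E (bigD1 (Ordinal qN)) /=; first by rewrite qn.
  rewrite qp /=; apply/andP; split.
    rewrite ltNge; apply/negP => qxi; move/negP: nQ; apply.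
    by rewrite /Q; apply: Qxi_dvd => //; [exact: ltW | exact: prime_gt0].
  by apply: le_trans px; rewrite ler_nat ltnW.
by rewrite E0.
Qed.
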